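(* For every instance with nonnegative-value players (and any number of teams), there exists an allocation that is both EF1 and Pareto optimal.
   Context: Setting: teams $T=[n]$, players $P=\{p_1,\dots,p_m\}$. Each player $p$ has a complete, transitive weak preference $\succsim_p$ over $T$. Each team $i$ has an additive valuation $v_i:2^P\to\mathbb{R}$, $v_i(S)=\sum_{p\in S}v_i(p)$; nonnegative-value players means $v_i(p)\ge0$ for all $i,p$. An allocation is an ordered partition $(A_1,\dots,A_n)$ of $P$. $A$ is EF1 if for all distinct $i,j$ there are $X\subseteq A_i$, $Y\subseteq A_j$ with $|X\cup Y|\le1$ and $v_i(A_i\setminus X)\ge v_i(A_j\setminus Y)$. A team is better (worse) off in $A'$ than in $A$ if $v_i(A'_i)>v_i(A_i)$ (resp. $<$); a player is better (worse) off if she strictly prefers (strictly disprefers) her team in $A'$ to her team in $A$. $A$ is Pareto dominated by $A'$ if no party (team or player) is worse off and at least one party is better off; $A$ is Pareto optimal (PO) if not Pareto dominated by any allocation. *)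

(* Defs.v *)
From mathcomp Require Import all_boot all_order all_algebra.
Set Implicit Arguments. Unset Strict Implicit. Unset Printing Implicit Defensive.
Import Order.TTheory GRing.Theory Num.Theory.
Local Open Scope ring_scope.

(* Teams are 'I_n, players are the elements of a finite type P.
   An allocation (ordered partition of P into n parts) is a map P -> 'I_n;
   part i is  bundle A i = [set p | A p == i]. *)
Definition allocation (n : nat) (P : finType) := P -> 'I_n.

Definition bundle n (P : finType) (A : allocation n P) (i : 'I_n) : {set P} :=
  [set p | A p == i].

Definition val_set (R : numDomainType) n (P : finType)
  (v : 'I_n -> P -> R) (i : 'I_n) (S : {set P}) : R :=
  \sum_(p in S) v i p.

Definition weak_order n (r : rel 'I_n) : Prop :=
  (forall i j, r i j || r j i) /\ (forall i j k, r i j -> r j k -> r i k).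

Definition EF1 (R : numDomainType) n (P : finType)
  (v : 'I_n -> P -> R) (A : allocation n P) : Prop :=
  forall i j : 'I_n, i != j ->
    exists (X Y : {set P}),
      [/\ X \subset bundle A i, Y \subset bundle A j, (#|X :|: Y| <= 1)%N
        & val_set v i (bundle A j :\: Y) <= val_set v i (bundle A i :\: X)].

(* pref p i j  means  i \succsim_p j *)
Definition strict_pref n (r : rel 'I_n) (i j : 'I_n) : bool := r i j && ~~ r j i.

Definition pareto_dominates (R : numDomainType) n (P : finType)
  (v : 'I_n -> P -> R) (pref : P -> rel 'I_n) (A A' : allocation n P) : Prop :=
  (forall i, val_set v i (bundle A i) <= val_set v i (bundle A' i)) /\
  (forall p, ~~ strict_pref (pref p) (A p) (A' p)) /\
  ((exists i, val_set v i (bundle A i) < val_set v i (bundle A' i)) \/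
   (exists p, strict_pref (pref p) (A' p) (A p))).

Definition pareto_optimal (R : numDomainType) n (P : finType)
  (v : 'I_n -> P -> R) (pref : P -> rel 'I_n) (A : allocation n P) : Prop :=
  ~ exists A' : allocation n P, pareto_dominates v pref A A'.

(* Main.v *)
Require Import Defs.
From mathcomp Require Import all_boot all_order all_algebra.
From mathcomp Require Import ring lra.
From Stdlib Require Import FunctionalExtensionality.
Set Implicit Arguments. Unset Strict Implicit. Unset Printing Implicit Defensive.
Import Order.TTheory GRing.Theory Num.Theory.
Local Open Scope ring_scope.

Lemma exists_max d (O : orderType d) (T : finType) (Q : pred T) (f : T -> O) x0 :
  Q x0 -> exists x, Q x /\ forall y, Q y -> (f y <= f x)%O.
Proof.
move=> Qx0.
have gen : forall (s : seq T) a, exists x, x \in a :: s /\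
    forall y, y \in a :: s -> (f y <= f x)%O.
  elim=> [|b s IH] a.
    by exists a; split; rewrite ?inE // => y; rewrite inE => /eqP ->.
  have [x [xs Hx]] := IH b.
  case: (leP (f a) (f x)) => fa.
    exists x; split; first by rewrite inE xs orbT.
    by move=> y; rewrite inE => /orP [/eqP ->|/Hx].
  exists a; split; first by rewrite inE eqxx.
  move=> y; rewrite inE => /orP [/eqP ->//|/Hx Hy].
  exact: (le_trans Hy (ltW fa)).
case E: (enum Q) => [|a s].
  by have := mem_enum Q x0; rewrite E in_nil unfold_in Qx0.
have [x [xs Hx]] := gen s a.
exists x; split; first by move: xs; rewrite -E mem_enum.
by move=> y Qy; apply: Hx; rewrite -E mem_enum.
Qed.

Lemma split2 (T : Type) (idx : T) (op : Monoid.com_law idx) n (F : 'I_n -> T) i j :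
  i != j -> \big[op/idx]_k F k = op (F i) (op (F j) (\big[op/idx]_(k | (k != i) && (k != j)) F k)).
Proof.
move=> ij; rewrite (bigD1 i) //= (bigD1 j) //=; last by rewrite eq_sym.
Qed.

Definition posn (R : numDomainType) (x : R) : nat := nat_of_bool (0 < x).
Definition wpos (R : numDomainType) (x : R) := if 0 < x then x else 1.
Definition Cf (R : numDomainType) n (u : 'I_n -> R) : nat := (\sum_k posn (u k))%N.
Definition NWf (R : numDomainType) n (u : 'I_n -> R) : R := \prod_k wpos (u k).

Lemma wpos_gt0 (R : numDomainType) (x : R) : 0 < wpos x.
Proof. by rewrite /wpos; case: ifP. Qed.

Lemma split_rest (R : numDomainType) n (ua ub : 'I_n -> R) i j :
  (forall k, k != i -> k != j -> ua k = ub k) ->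
  (\sum_(k | (k != i) && (k != j)) posn (ua k) = \sum_(k | (k != i) && (k != j)) posn (ub k))%N /\
  \prod_(k | (k != i) && (k != j)) wpos (ua k) = \prod_(k | (k != i) && (k != j)) wpos (ub k).
Proof.
move=> H; split; apply: eq_bigr => k /andP [ki kj]; by rewrite H.
Qed.

Lemma local_improve (R : realFieldType) n (ua ub : 'I_n -> R) i j :
  i != j -> (forall k, k != i -> k != j -> ua k = ub k) ->
  0 <= ua i -> 0 <= ua j -> 0 <= ub i -> 0 <= ub j ->
  ((0 < ua j) /\ ua i * ua j < ub i * ub j) \/
  (ua j = 0 /\ ub j = 0 /\ ua i < ub i) ->
  (Cf ua < Cf ub)%N \/ (Cf ua = Cf ub /\ NWf ua < NWf ub).
Proof.
move=> ij H ai aj bi bj hyp.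
have [rC rN] := split_rest H.
rewrite /Cf /NWf !(split2 _ _ ij) /= rC rN.
set sC := (\sum_(k | _) _)%N. set sN := \prod_(k | _) _.
have sN0 : 0 < sN by apply: prodr_gt0 => k _; exact: wpos_gt0.
rewrite /wpos /posn.
case: hyp => [[aj0 lt]|[aj0 [bj0 lt]]].
  have bi0 : 0 < ub i.
    rewrite lt_neqAle bi andbT; apply/negP => /eqP b0.
    by move: lt; rewrite -b0 mul0r; nra.
  have bj0 : 0 < ub j.
    rewrite lt_neqAle bj andbT; apply/negP => /eqP b0.
    by move: lt; rewrite -b0 mulr0; nra.
  rewrite aj0 bi0 bj0.
  case: (boolP (0 < ua i)) => ai0.
    right; split=> //.
    by rewrite !mulrA ltr_pM2r.
  by left; rewrite /= ltn_add2r.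
rewrite aj0 bj0 ltxx.
case: (boolP (0 < ua i)) => ai0.
  have -> : 0 < ub i by apply: lt_trans lt.
  by right; split=> //; rewrite !mulrA ltr_pM2r // ltr_pM2r.
have ai00 : ua i = 0 by apply/eqP; rewrite eq_le ai andbT leNgt.
have -> : 0 < ub i by rewrite -ai00.
by left.
Qed.
Lemma key (R: realFieldType) (ui uj V vig vjg: R) : vjg*V <= vig*uj -> 0 < vig -> 0 <= vjg -> 0 <= ui -> 0 < uj -> ui < V - vig -> ui*uj < (ui+vig)*(uj - vjg).
Proof.
move=> h1 h2 h3 h4 h5 h6.
case: (ltgtP vjg 0) => [|hv|->]; first by rewrite ltNge h3.
  have h7 : vjg * (ui + vig) < vjg * V by rewrite ltr_pM2l //; lra.
  nra.
have := mulr_gt0 h2 h5. nra.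
Qed.

Definition uA (R : numDomainType) n (P : finType) (v : 'I_n -> P -> R) (A : allocation n P) : 'I_n -> R :=
  fun k => val_set v k (bundle A k).

Definition moveg n (P : finType) (A : allocation n P) (g : P) (i : 'I_n) : allocation n P :=
  fun p => if p == g then i else A p.

Lemma bundle_move_i n (P : finType) (A : allocation n P) g i :
  A g != i -> bundle (moveg A g i) i = g |: bundle A i.
Proof.
move=> gi; apply/setP => p; rewrite /bundle !inE /moveg.
by case: (p =P g) => [->|]; rewrite ?eqxx.
Qed.

Lemma bundle_move_j n (P : finType) (A : allocation n P) g i j :
  A g = j -> j != i -> bundle (moveg A g i) j = bundle A j :\ g.
Proof.
move=> gj ji; apply/setP => p; rewrite /bundle !inE /moveg.
case: (p =P g) => [->|] /=; last by [].
by rewrite eq_sym (negbTE ji).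
Qed.

Lemma bundle_move_k n (P : finType) (A : allocation n P) g i k :
  k != i -> k != A g -> bundle (moveg A g i) k = bundle A k.
Proof.
move=> ki kg; apply/setP => p; rewrite /bundle !inE /moveg.
case: (p =P g) => [->|] //=.
by rewrite eq_sym (negbTE ki) eq_sym (negbTE kg).
Qed.

Lemma val_set_ge0 (R : numDomainType) n (P : finType) (v : 'I_n -> P -> R) i S :
  (forall i p, 0 <= v i p) -> 0 <= val_set v i S.
Proof. by move=> hv; apply: sumr_ge0 => p _. Qed.

Lemma EF1_of_max (R : realFieldType) n (P : finType) (v : 'I_n -> P -> R) (A : allocation n P) :
  (forall i p, 0 <= v i p) ->
  (forall B : allocation n P, ~ ((Cf (uA v A) < Cf (uA v B))%N \/
        (Cf (uA v A) = Cf (uA v B) /\ NWf (uA v A) < NWf (uA v B)))) ->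
  EF1 v A.
Proof.
move=> hv hmax i j ij.
set u := uA v A.
set V := val_set v i (bundle A j).
case: (leP V (u i)) => hV.
  exists set0, set0; split; rewrite ?sub0set ?setU0 ?cards0 ?setD0 //.
case: (pickP (fun h => (h \in bundle A j) && (0 < v i h))) => [h0 Hh0|none]; last first.
  exfalso; move: hV; rewrite /V /val_set big1 ?ltNge.
    by have := val_set_ge0 i (bundle A i) hv; rewrite /u /uA => ->.
  move=> p pj; have := none p; rewrite pj /= => /negbT.
  by rewrite lt_neqAle hv andbT negbK => /eqP <-.
have [g [/andP [gj gpos] Hg]] := @exists_max _ R P (fun h => (h \in bundle A j) && (0 < v i h)) (fun h => - (v j h / v i h)) h0 Hh0.
have cross : forall h, h \in bundle A j -> v j g * v i h <= v i g * v j h.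
  move=> h hj.
  case: (ltgtP (v i h) 0) => [|hpos|->]; first by rewrite ltNge hv.
    have := Hg h; rewrite hj hpos => /(_ isT); rewrite lerN2 => le.
    have pp : 0 < v i g * v i h by exact: mulr_gt0.
    rewrite -(ler_pM2r pp) in le.
    have e1 : v j g / v i g * (v i g * v i h) = v j g * v i h.
      by rewrite mulrA divfK ?gt_eqF.
    have e2 : v j h / v i h * (v i g * v i h) = v i g * v j h.
      by rewrite [v i g * v i h]mulrC mulrA divfK ?gt_eqF // mulrC.
    by rewrite -e1 -e2.
  by rewrite mulr0 mulr_ge0.
have sumcross : v j g * V <= v i g * u j.
  rewrite /V /u /uA /val_set !mulr_sumr; apply: ler_sum => h hj; exact: cross.
have gj' : A g = j by move: gj; rewrite inE => /eqP.
have Vsplit : V = val_set v i (bundle A j :\ g) + v i g.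
  by rewrite /V /val_set (big_setD1 g gj) /= addrC.
case: (leP (val_set v i (bundle A j :\ g)) (u i)) => hg.
  exists set0, [set g]; split; rewrite ?sub0set ?sub1set ?set0U ?cards1 ?setD0 //.
exfalso; apply: (hmax (moveg A g i)).
set w := uA v (moveg A g i).
have gi : A g != i by rewrite gj' eq_sym.
have wi : w i = u i + v i g.
  by rewrite /w /u /uA /val_set bundle_move_i // big_setU1 /= 1?addrC // inE gj' eq_sym.
have wj : w j = u j - v j g.
  rewrite /w /u /uA /val_set bundle_move_j // 1?eq_sym //.
  by rewrite [in RHS](big_setD1 g gj) /= addrC addrK.
apply: local_improve ij _ _ _ _ _ _.
- move=> k ki kj; rewrite /w /u /uA bundle_move_k //; by rewrite gj'.
- exact: val_set_ge0.
- exact: val_set_ge0.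
- exact: val_set_ge0.
- exact: val_set_ge0.
case: (ltgtP (u j) 0) => [|ujpos|uj0].
- by rewrite ltNge val_set_ge0.
- left; split => //; rewrite wi wj.
  apply: key; [exact: sumcross|exact: gpos|exact: hv|exact: val_set_ge0|exact: ujpos|].
  by rewrite Vsplit addrK.
- right; split => //.
  have wj0 : 0 <= w j by exact: val_set_ge0.
  split; last by rewrite wi ltrDl.
  by apply/eqP; rewrite eq_le wj0 andbT wj uj0 sub0r oppr_le0 hv.
Qed.

Definition rank n (r : rel 'I_n) (a : 'I_n) : nat := #|[set k | r a k]|.
Definition Sf n (P : finType) (pref : P -> rel 'I_n) (A : allocation n P) : nat :=
  (\sum_p rank (pref p) (A p))%N.

Lemma weak_back n (r : rel 'I_n) a b : weak_order r -> ~~ strict_pref r a b -> r b a.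
Proof.
move=> [tot _]; rewrite /strict_pref; case E: (r b a) => //.
by have := tot a b; rewrite E orbF => ->.
Qed.

Lemma rank_le n (r : rel 'I_n) a b : weak_order r -> ~~ strict_pref r a b -> (rank r a <= rank r b)%N.
Proof.
move=> w ns; have ba := weak_back w ns; case: w => [_ tr].
apply: subset_leq_card; apply/subsetP => k; rewrite !inE => ak; exact: tr ba ak.
Qed.

Lemma rank_lt n (r : rel 'I_n) a b : weak_order r -> strict_pref r b a -> (rank r a < rank r b)%N.
Proof.
move=> w /andP [ba nab]; case: (w) => [tot tr].
apply: proper_card; apply/properP; split.
  apply/subsetP => k; rewrite !inE => ak; exact: tr ba ak.
exists b; rewrite !inE //.
by have := tot b b; rewrite orbb.
Qed.

Lemma posn_le (R : numDomainType) (x y : R) : x <= y -> (posn x <= posn y)%N.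
Proof.
rewrite /posn => xy; case: (boolP (0 < x)) => // hx.
by rewrite (lt_le_trans hx xy).
Qed.

Lemma PO_of_max (R : realFieldType) n (P : finType) (pref : P -> rel 'I_n)
    (v : 'I_n -> P -> R) (A : allocation n P) :
  (forall i p, 0 <= v i p) -> (forall p, weak_order (pref p)) ->
  (forall B, (Cf (uA v B) <= Cf (uA v A))%N) ->
  (forall B, Cf (uA v B) = Cf (uA v A) -> NWf (uA v B) <= NWf (uA v A)) ->
  (forall B, Cf (uA v B) = Cf (uA v A) -> NWf (uA v B) = NWf (uA v A) ->
      (Sf pref B <= Sf pref A)%N) ->
  pareto_optimal v pref A.
Proof.
move=> hv hw hC hN hS [B [teams [players better]]].
set ua := uA v A. set ub := uA v B.
have te : forall k, ua k <= ub k by exact: teams.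
have pos : forall k, 0 < ub k -> 0 < ua k.
  move=> k bk; apply/negPn/negP => ak.
  have : (Cf ua < Cf ub)%N.
    rewrite /Cf (bigD1 k) //= [X in (_ < X)%N](bigD1 k) //= /posn bk (negbTE ak) /=.
    by rewrite ltnS; apply: leq_sum => l _; exact: posn_le.
  by rewrite ltnNge hC.
have Ceq : Cf ub = Cf ua.
  apply/eqP; rewrite eqn_leq hC /=.
  by apply: leq_sum => l _; exact: posn_le.
have wle : forall k, 0 <= wpos (ua k) <= wpos (ub k).
  move=> k; rewrite ltW ?wpos_gt0 //= /wpos.
  case: (boolP (0 < ua k)) => ak.
    by rewrite (lt_le_trans ak (te k)).
  case: (boolP (0 < ub k)) => bk //.
  by rewrite (pos k bk) in ak.
have NWle : NWf ua <= NWf ub by apply: ler_prod => k _; exact: wle.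
have Neq : NWf ub = NWf ua by apply/eqP; rewrite eq_le NWle hN.
case: better => [[k lt]|[p sp]].
  have ak : 0 < ua k.
    apply: pos; apply: le_lt_trans lt; exact: val_set_ge0.
  have : NWf ua < NWf ub.
    rewrite /NWf (bigD1 k) //= [X in _ < X](bigD1 k) //=.
    set ra := \prod_(l | l != k) _. set rb := \prod_(l | l != k) _.
    have ra0 : 0 < ra by apply: prodr_gt0 => l _; exact: wpos_gt0.
    have rab : ra <= rb by apply: ler_prod => l _; exact: wle.
    have bk : 0 < ub k by exact: lt_trans lt.
    rewrite /wpos ak bk.
    apply: (lt_le_trans (y := ub k * ra)).
      by rewrite ltr_pM2r.
    by rewrite ler_pM2l.
  by rewrite Neq ltxx.
have : (Sf pref A < Sf pref B)%N.
  rewrite /Sf (bigD1 p) //= [X in (_ < X)%N](bigD1 p) //=.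
  rewrite -addSn; apply: leq_add; first exact: rank_lt.
  by apply: leq_sum => q _; apply: rank_le.
by rewrite ltnNge hS.
Qed.

Definition fa n (P : finType) (F : {ffun P -> 'I_n}) : allocation n P := fun p => F p.

Lemma fa_ffun n (P : finType) (B : allocation n P) : fa [ffun p => B p] = B.
Proof. by apply: functional_extensionality => p; rewrite /fa ffunE. Qed.

Unset Implicit Arguments.
Theorem theorem5 (R : realFieldType) (n : nat) (P : finType)
  (pref : P -> rel 'I_n) (v : 'I_n -> P -> R) :
  (0 < n)%N ->
  (forall p, weak_order (pref p)) ->
  (forall i p, 0 <= v i p) ->
  exists A : allocation n P, EF1 v A /\ pareto_optimal v pref A.
Proof.
move=> n0 hw hv.
pose i0 : 'I_n := Ordinal n0.
pose F0 : {ffun P -> 'I_n} := [ffun _ => i0].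
have [F1 [_ H1]] := @exists_max _ nat {ffun P -> 'I_n} predT
   (fun F => Cf (uA v (fa F))) F0 isT.
set c := Cf (uA v (fa F1)) in H1.
have [F2 [/eqP C2 H2]] := @exists_max _ R {ffun P -> 'I_n}
   (fun F => Cf (uA v (fa F)) == c) (fun F => NWf (uA v (fa F))) F1 (eqxx _).
have Q2 : (Cf (uA v (fa F2)) == c) && (NWf (uA v (fa F2)) == NWf (uA v (fa F2))) by rewrite C2 !eqxx.
have [F3 [/andP [/eqP C3 /eqP N3] H3]] := @exists_max _ nat {ffun P -> 'I_n}
   (fun F => (Cf (uA v (fa F)) == c) && (NWf (uA v (fa F)) == NWf (uA v (fa F2))))
   (fun F => Sf pref (fa F)) F2 Q2.
have hC : forall B, (Cf (uA v B) <= c)%N.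
  by move=> B; have := H1 [ffun p => B p] isT; rewrite fa_ffun.
have hN : forall B, Cf (uA v B) = c -> NWf (uA v B) <= NWf (uA v (fa F2)).
  by move=> B hB; have := H2 [ffun p => B p]; rewrite fa_ffun hB eqxx => /(_ isT).
exists (fa F3); split.
  apply: EF1_of_max => // B [lt|[eq lt]].
    by move: lt; rewrite ltnNge C3 hC.
  have := hN B; rewrite -eq C3 => /(_ erefl); rewrite -N3 => le.
  by move: lt; rewrite ltNge le.
apply: PO_of_max => //.
- by move=> B; rewrite C3.
- by move=> B; rewrite C3 N3 => /hN.
move=> B; rewrite C3 N3 => hB hB'.
have := H3 [ffun p => B p]; rewrite fa_ffun hB hB' !eqxx; exact.
Qed.
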